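(* Let $n\ge2$ and let $\mathcal{S}$ be a set of two-factor interactions among factors $F_1,\dots,F_n$. Suppose at least one of the following holds: (i) every factor appears in at most three interactions of $\mathcal{S}$, and there is no set of four factors for which $\mathcal{S}$ contains all six pairwise interactions; (ii) there are at most three factors each of which appears in more than two interactions of $\mathcal{S}$; (iii) either there is no sequence of distinct factors $G_1,\dots,G_m$ ($m\ge3$) with $G_1G_2,G_2G_3,\dots,G_{m-1}G_m,G_mG_1\in\mathcal{S}$, or there is at least one factor common to all such sequences. Then there exists a blocked $2^n$ factorial in blocks of size four from which all main effects and all interactions in $\mathcal{S}$ are estimable.
   Context: A blocked $2^n$ factorial in blocks of size four is specified by a $2\times n$ generator matrix $X$ over $\mathrm{GF}(2)$ of rank $2$: the principal block is the row space of $X$ and the other blocks are its cosets in $\mathrm{GF}(2)^n$. An effect of a set $S$ of factors, with contrast $(-1)^{\sum_{j\in S}x_j}$, is estimable iff its contrast sums to zero over every block. *)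

(* Defs.v *)
From HB Require Import structures.
From mathcomp Require Import all_boot all_order all_algebra.
Set Implicit Arguments. Unset Strict Implicit. Unset Printing Implicit Defensive.
Import GRing.Theory.
Local Open Scope ring_scope.

(* Factors are indexed by 'I_n; a treatment combination is a row vector
   x : 'rV['F_2]_n.  A design is a generator matrix X : 'M['F_2]_(2, n)
   of rank 2. *)

Definition block (n : nat) (X : 'M['F_2]_(2, n)) (c : 'rV['F_2]_n)
  : pred 'rV['F_2]_n := fun x => (x - c <= X)%MS.

Definition contrast (n : nat) (S : {set 'I_n}) (x : 'rV['F_2]_n) : int :=
  if (\sum_(j in S) x 0 j == 0 :> 'F_2) then 1 else -1.

Definition estimable (n : nat) (X : 'M['F_2]_(2, n)) (S : {set 'I_n}) : Prop :=
  forall c : 'rV['F_2]_n, \sum_(x | block X c x) contrast S x = 0.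

Definition two_factor_set (n : nat) (Sg : {set {set 'I_n}}) : Prop :=
  forall e, e \in Sg -> #|e| = 2%N.

Definition degree (n : nat) (Sg : {set {set 'I_n}}) (i : 'I_n) : nat :=
  #|[set e in Sg | i \in e]|.

Definition is_cycle (n : nat) (Sg : {set {set 'I_n}}) (s : seq 'I_n) : Prop :=
  uniq s /\ (3 <= size s)%N /\
  forall (x0 : 'I_n) (k : nat), (k < size s)%N ->
    [set nth x0 s k; nth x0 s (k.+1 %% size s)] \in Sg.

Definition cond_i (n : nat) (Sg : {set {set 'I_n}}) : Prop :=
  (forall i, (degree Sg i <= 3)%N) /\
  ~ (exists F : {set 'I_n}, #|F| = 4%N /\
       forall i j, i \in F -> j \in F -> i != j -> [set i; j] \in Sg).

Definition cond_ii (n : nat) (Sg : {set {set 'I_n}}) : Prop :=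
  (#|[set i | (2 < degree Sg i)%N]| <= 3)%N.

Definition cond_iii (n : nat) (Sg : {set {set 'I_n}}) : Prop :=
  (forall s, ~ is_cycle Sg s) \/
  (exists i : 'I_n, forall s, is_cycle Sg s -> i \in s).

(* Main.v *)
Require Import Defs.
From HB Require Import structures.
From mathcomp Require Import all_boot all_order all_algebra all_fingroup.
From mathcomp Require Import zify.
From Stdlib Require Import Classical.

Set Implicit Arguments. Unset Strict Implicit. Unset Printing Implicit Defensive.

Definition nbr (T : finType) (e : rel T) (V : {set T}) (y : T) : {set T} :=
  [set z in V | e y z].

Definition lproper (T : finType) (e : rel T) (V : {set T})
  (L : T -> {set 'I_3}) (f : T -> 'I_3) :=
  (forall i j, i \in V -> j \in V -> e i j -> f i != f j) /\
  (forall i, i \in V -> f i \in L i).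

Definition closed (T : finType) (e : rel T) (W U : {set T}) :=
  forall u w, u \in U -> w \in W -> e u w -> w \in U.

Lemma pick_avoid (A B : {set 'I_3}) :
  (#|A| < #|B|)%N -> exists2 c, c \in B & c \notin A.
Proof.
move=> h; apply/subsetPn; apply: contraL h => /subset_leq_card.
by rewrite -leqNgt.
Qed.

Lemma lproper0 (T : finType) (e : rel T) L (V : {set T}) :
  V = set0 -> exists f, lproper e V L f.
Proof.
move=> ->.
exists (fun y => ord0); split => i; first by rewrite inE.
by rewrite inE.
Qed.

Lemma ext (T : finType) (e : rel T) (esym : symmetric e)
  (eirr : irreflexive e) (V : {set T}) (L : T -> {set 'I_3}) (y : T) (f : T -> 'I_3) :
  y \in V -> lproper e (V :\ y) L f -> (#|nbr e V y| < #|L y|)%N ->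
  exists g, lproper e V L g /\ (forall z, z != y -> g z = f z).
Proof.
move=> yV [fp fL] hc.
have [c cL cA] : exists2 c, c \in L y & c \notin f @: nbr e V y.
  apply: pick_avoid; exact: leq_ltn_trans (leq_imset_card _ _) hc.
exists (fun z => if z == y then c else f z); split; last by move=> z /negbTE ->.
split.
- move=> i j iV jV eij.
  case: (eqVneq i y) => [eiy|iy]; case: (eqVneq j y) => [ejy|jy].
  + by rewrite eiy ejy eirr in eij.
  + apply: contra cA => /eqP ->; apply: imset_f.
    by rewrite inE jV -eiy eij.
  + rewrite eq_sym; apply: contra cA => /eqP ->; apply: imset_f.
    by rewrite inE iV esym -ejy eij.
  + by apply: fp => //; rewrite !inE ?iy ?jy.
- move=> i iV; case: (eqVneq i y) => [->|iy] //.
  by apply: fL; rewrite !inE iy.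
Qed.

Lemma DL (T : finType) (e : rel T) (esym : symmetric e)
  (eirr : irreflexive e) (L : T -> {set 'I_3}) (W : {set T}) :
  (forall y, y \in W -> #|nbr e W y| <= #|L y|)%N ->
  (forall U : {set T}, U \subset W -> U != set0 -> closed e W U ->
     exists2 y, y \in U & (#|nbr e W y| < #|L y|)%N) ->
  exists f, lproper e W L f.
Proof.
have [k hk] : exists k, (#|W| <= k)%N by exists #|W|.
elim: k W hk => [|k IH] W hk hdeg hstr.
  by apply: lproper0; apply/eqP; rewrite -cards_eq0 -leqn0.
have [W0|Wn0] := eqVneq W set0; first exact: lproper0.
have [y yW ystr] := hstr W (subxx _) Wn0 (fun u w _ wW _ => wW).
have sub1 : forall z, nbr e (W :\ y) z \subset nbr e W z.
  by move=> z; apply/subsetP => w; rewrite !inE => /andP[/andP[_ ->] ->].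
have [f fp] : exists f, lproper e (W :\ y) L f.
  apply: IH.
  - by move: hk; rewrite (cardsD1 y W) yW add1n ltnS.
  - move=> z; rewrite inE => /andP[_ zW].
    exact: leq_trans (subset_leq_card (sub1 z)) (hdeg z zW).
  - move=> U sU Un0 cU.
    have sUW : U \subset W by apply: subset_trans sU (subD1set _ _).
    case: (classic (exists2 u, u \in U & e u y)) => [[u uU euy]|nadj].
    + exists u => //.
      have uW : u \in W by apply: (subsetP sUW).
      apply: leq_trans (hdeg u uW).
      apply: proper_card; apply/properP; split; first exact: sub1.
      by exists y; rewrite !inE ?eqxx //= yW.
    + have cU' : closed e W U.
        move=> u w uU wW euw; apply: (cU u w uU) => //.
        rewrite !inE wW andbT; apply/eqP => wy; apply: nadj; exists u => //.
        by rewrite -wy.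
      have [z zU zstr] := hstr U sUW Un0 cU'.
      exists z => //; exact: leq_ltn_trans (subset_leq_card (sub1 z)) zstr.
have [g [gp _]] := ext esym eirr yW fp ystr.
by exists g.
Qed.

Lemma perm3 (a1 a2 c1 c2 : 'I_3) : (a1 == a2) = (c1 == c2) ->
  exists s : 'I_3 -> 'I_3, [/\ injective s, s a1 = c1 & s a2 = c2].
Proof.
move=> h.
pose t := tperm a1 c1.
exists (fun z => tperm (t a2) c2 (t z)); split.
- by move=> z1 z2 /perm_inj /perm_inj.
- rewrite /t tpermL; case: (eqVneq c1 c2) => [e12|ne].
    by move: h; rewrite e12 eqxx => /eqP <-; rewrite !tpermL.
  rewrite tpermD //; last by rewrite eq_sym.
  by rewrite -[X in _ != X](tpermL a1 c1) (inj_eq perm_inj) eq_sym h.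
- by rewrite tpermL.
Qed.

Lemma glue (T : finType) (e : rel T) (esym : symmetric e) (V U Q : {set T})
  (s : 'I_3 -> 'I_3) (hU hQ c : T -> 'I_3) :
  injective s ->
  (forall y, y \in U -> y \notin Q) ->
  (forall u q, u \in U -> q \in Q -> ~~ e u q) ->
  lproper e U (fun _ => setT) hU -> lproper e Q (fun _ => setT) hQ ->
  (forall y z, y \in V -> z \in V -> y \notin U -> y \notin Q ->
     z \notin U -> z \notin Q -> e y z -> c y != c z) ->
  (forall y u, y \in V -> y \notin U -> y \notin Q -> u \in U -> e y u ->
     s (hU u) != c y) ->
  (forall y q, y \in V -> y \notin U -> y \notin Q -> q \in Q -> e y q ->
     hQ q != c y) ->
  exists g, lproper e V (fun _ => setT) g.
Proof.
move=> sinj dUQ nUQ [pU _] [pQ _] hS hSU hSQ.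
exists (fun y => if y \in U then s (hU y) else if y \in Q then hQ y else c y).
split=> [i j iV jV eij|i _]; last by rewrite inE.
rewrite /=; have [iU|iU] := boolP (i \in U); have [jU|jU] := boolP (j \in U).
- by rewrite (inj_eq sinj); apply: pU.
-   have [jQ|jQ] := boolP (j \in Q); first by rewrite (negbTE (nUQ _ _ iU jQ)) in eij.
  by apply: hSU => //; rewrite esym.
- rewrite eq_sym; have [iQ|iQ] := boolP (i \in Q).
    by rewrite esym (negbTE (nUQ _ _ jU iQ)) in eij.
  by apply: hSU.
- have [iQ|iQ] := boolP (i \in Q); have [jQ|jQ] := boolP (j \in Q).
  + by apply: pQ.
  + by apply: hSQ => //; rewrite esym.
  + by rewrite eq_sym; apply: hSQ.
  + by apply: hS.
Qed.

Definition col (T : finType) (e : rel T) (V : {set T}) :=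
  exists f, lproper e V (fun _ => setT) f.

Lemma avoid3 (A : {set 'I_3}) : (#|A| <= 2)%N -> exists c, c \notin A.
Proof.
move=> h; have h' : (#|A| < #|[set: 'I_3]|)%N by rewrite cardsT card_ord.
by have [c _ cA] := pick_avoid h'; exists c.
Qed.

Lemma final_glue (T : finType) (e : rel T) (esym : symmetric e)
  (eirr : irreflexive e) (V U Q : {set T}) (a b : T) (hU hQ : T -> 'I_3)
  (aa ab ca cb : 'I_3) :
  a != b -> ~~ e a b ->
  (forall y, y \in U -> y \notin Q) ->
  (forall u q, u \in U -> q \in Q -> ~~ e u q) ->
  lproper e U (fun _ => setT) hU -> lproper e Q (fun _ => setT) hQ ->
  (forall y, y \in V -> y \notin U -> y \notin Q -> y = a \/ y = b) ->
  (forall u, u \in U -> e a u -> hU u != aa) ->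
  (forall u, u \in U -> e b u -> hU u != ab) ->
  (forall q, q \in Q -> e a q -> hQ q != ca) ->
  (forall q, q \in Q -> e b q -> hQ q != cb) ->
  (aa == ab) = (ca == cb) -> col e V.
Proof.
move=> neab nab dUQ nUQ pU pQ hS hUa hUb hQa hQb heq.
have [s [sinj sa sb]] := perm3 heq.
have cb' : (if b == a then ca else cb) = cb by rewrite eq_sym (negbTE neab).
apply: (glue (c := fun y => if y == a then ca else cb) esym sinj dUQ nUQ pU pQ).
- move=> y z yV zV yU yQ zU zQ.
  have [->|->] := hS y yV yU yQ; have [->|->] := hS z zV zU zQ; rewrite ?eirr //.
  + by move=> h; rewrite h in nab.
  + by rewrite esym => h; rewrite h in nab.
- move=> y u yV yU yQ uU.
  have [->|->] := hS y yV yU yQ; rewrite ?eqxx ?cb' => eyu.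
  + by rewrite -sa (inj_eq sinj); apply: hUa.
  + by rewrite -sb (inj_eq sinj); apply: hUb.
- move=> y q yV yU yQ qQ.
  have [->|->] := hS y yV yU yQ; rewrite ?eqxx ?cb' => eyq.
  + by apply: hQa.
  + by apply: hQb.
Qed.

Lemma nbr_split (T : finType) (e : rel T) (V Y : {set T}) s :
  #|nbr e V s| = (#|nbr e (V :&: Y) s| + #|nbr e (V :\: Y) s|)%N.
Proof.
rewrite -(cardsID Y (nbr e V s)); congr (_ + _); apply: eq_card => z;
  by rewrite !inE; case: (z \in V); case: (z \in Y); case: (e s z).
Qed.

Lemma img_avoid (T : finType) (e : rel T) (U : {set T}) (h : T -> 'I_3) s c :
  c \notin h @: nbr e U s -> forall u, u \in U -> e s u -> h u != c.
Proof.
move=> cA u uU esu; apply: contra cA => /eqP <-; apply: imset_f.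
by rewrite inE uU esu.
Qed.

Lemma avoid_img (T : finType) (e : rel T) (U : {set T}) (h : T -> 'I_3) s :
  (#|nbr e U s| <= 2)%N -> exists c, c \notin h @: nbr e U s.
Proof. by move=> H; apply: avoid3; exact: leq_trans (leq_imset_card _ _) H. Qed.

Lemma diff3 (c : 'I_3) : exists c' : 'I_3, c' != c.
Proof.
have h : (#|[set c]| <= 2)%N by rewrite cards1.
by have [d] := avoid3 h; rewrite inE; exists d.
Qed.

Lemma cardU_le (T : finType) (A B : {set T}) : (#|A :|: B| <= #|A| + #|B|)%N.
Proof. exact: (leq_card_setU A B).1. Qed.

Lemma nbr_eq (T : finType) (e : rel T) (V1 V2 : {set T}) s :
  (forall z, e s z -> (z \in V1) = (z \in V2)) -> nbr e V1 s = nbr e V2 s.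
Proof.
move=> H; apply/setP => z; rewrite !inE.
by case: (boolP (e s z)) => h; [rewrite (H z h) | rewrite !andbF].
Qed.

Lemma nbr0 (T : finType) (e : rel T) (U : {set T}) s u :
  #|nbr e U s| = 0%N -> u \in U -> e s u -> False.
Proof.
move=> /cards0_eq h uU esu; have : u \in nbr e U s by rewrite inE uU esu.
by rewrite h inE.
Qed.

Lemma glue_ab (T : finType) (e : rel T) (esym : symmetric e)
  (eirr : irreflexive e) (V U : {set T}) (x a b : T) :
  (forall V' : {set T}, (#|V'| < #|V|)%N -> col e V') ->
  x \in V -> a \in V -> b \in V -> a != b -> e x a -> e x b -> ~~ e a b ->
  #|nbr e V a| = 3 -> #|nbr e V b| = 3 ->
  U \subset V :\: [set a; b] -> closed e (V :\: [set a; b]) U ->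
  x \notin U -> U != set0 ->
  (#|nbr e U a| <= #|nbr e U b|)%N -> col e V.
Proof.
move=> IH xV aV bV neab xa xb nab da db sU cU xU Un0 kab.
have aU : a \notin U by apply/negP => /(subsetP sU); rewrite !inE eqxx.
have bU : b \notin U by apply/negP => /(subsetP sU); rewrite !inE eqxx orbT.
have UV : U \subset V by apply: subset_trans sU (subsetDl _ _).
have ltU : (#|U| < #|V|)%N.
  by apply: proper_card; apply/properP; split => //; exists a.
have [u0 u0U] := set0Pn _ Un0.
have ltVU : forall Y : {set T}, Y \subset V :\: U -> (#|Y| < #|V|)%N.
  move=> Y sY; apply: proper_card; apply/properP; split.
    by apply: subset_trans sY (subsetDl _ _).
  exists u0; first exact: (subsetP UV).
  by apply/negP => /(subsetP sY); rewrite inE u0U.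
have nUW : forall u q, u \in U -> q \in V :\: [set a; b] -> q \notin U ->
    ~~ e u q.
  move=> u q uU qW qU; apply/negP => euq.
  by move: (cU u q uU qW euq); rewrite (negbTE qU).
have nxa : x != a by apply: contraTneq xa => ->; rewrite eirr.
have nxb : x != b by apply: contraTneq xb => ->; rewrite eirr.
have eaz : forall z, e a z -> (z == a) = false /\ (z == b) = false.
  move=> z h; split; apply/negbTE/eqP => zE; first by rewrite zE eirr in h.
  by rewrite -zE h in nab.
have ebz : forall z, e b z -> (z == a) = false /\ (z == b) = false.
  move=> z h; split; apply/negbTE/eqP => zE; last by rewrite zE eirr in h.
  by rewrite -zE esym h in nab.
have nVU : forall s, s \in V -> e s =1 e s ->
    nbr e (V :&: U) s = nbr e U s.
  move=> s _ _; apply: nbr_eq => z _; rewrite inE.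
  by case: (boolP (z \in U)) => zU; rewrite ?andbF // (subsetP UV).
set Q := V :\: U :\: [set a; b].
have xQ : x \in Q by rewrite !inE xV xU (negbTE nxa) (negbTE nxb).
have QU : Q \subset V :\: U by apply: subsetDl.
have [hU hUp] := IH U ltU.
have [hQ hQp] := IH Q (ltVU Q QU).
have dUQ : forall y, y \in U -> y \notin Q.
  by move=> y yU; rewrite !inE yU /= andbF.
have nUQ : forall u q, u \in U -> q \in Q -> ~~ e u q.
  move=> u q uU; rewrite !inE => /andP[qab /andP[qU qV]].
  by apply: nUW => //; rewrite !inE qab qV.
have hSQ : forall y, y \in V -> y \notin U -> y \notin Q -> y = a \/ y = b.
  move=> y yV yU; rewrite !inE yU yV /= andbT negbK.
  by case/orP => /eqP ->; [left|right].
have spa : (#|nbr e U a| + #|nbr e Q a|)%N = 3.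
  rewrite -da (nbr_split e V U a) (nVU a aV (frefl _)).
  have -> // : nbr e (V :\: U) a = nbr e Q a.
  by apply: nbr_eq => z /eaz [za zb]; rewrite !inE za zb.
have spb : (#|nbr e U b| + #|nbr e Q b|)%N = 3.
  rewrite -db (nbr_split e V U b) (nVU b bV (frefl _)).
  have -> // : nbr e (V :\: U) b = nbr e Q b.
  by apply: nbr_eq => z /ebz [za zb]; rewrite !inE za zb.
have xQa : x \in nbr e Q a by rewrite inE xQ esym.
have xQb : x \in nbr e Q b by rewrite inE xQ esym.
have qa1 : (0 < #|nbr e Q a|)%N by rewrite card_gt0; apply/set0Pn; exists x.
have qb1 : (0 < #|nbr e Q b|)%N by rewrite card_gt0; apply/set0Pn; exists x.
have nin : forall (c : 'I_3) (A B : {set 'I_3}), c \notin A :|: B ->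
    c \notin A /\ c \notin B.
  by move=> c A B; rewrite in_setU negb_or => /andP.
have kb2 : (#|nbr e U b| <= 2)%N by move: spb qb1; clear; lia.
case: (posnP #|nbr e U a|) => [ka0|kapos].
  case: (posnP #|nbr e U b|) => [kb0|kbpos].
  - set Q2 := V :\: U.
    have [h2 h2p] := IH Q2 (ltVU Q2 (subxx _)).
    have [d hd] := diff3 ord0.
    apply: (@final_glue _ e esym eirr V U Q2 a b hU h2 ord0
      (if h2 a == h2 b then ord0 else d) (h2 a) (h2 b) neab nab).
    + by move=> y yU; rewrite inE yU.
    + move=> u q uU; rewrite inE => /andP[qU qV].
      case: (boolP (q \in [set a; b])) => qab.
        rewrite !inE in qab; apply/negP => h.
        case/orP: qab => /eqP qE; rewrite qE in h.
          by apply: (nbr0 ka0 uU); rewrite esym.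
        by apply: (nbr0 kb0 uU); rewrite esym.
      by apply: nUW => //; rewrite in_setD qab qV.
    + exact: hUp.
    + exact: h2p.
    + by move=> y yV yU; rewrite in_setD yU yV.
    + by move=> u uU h; case: (nbr0 ka0 uU h).
    + by move=> u uU h; case: (nbr0 kb0 uU h).
    + move=> q qQ h; rewrite eq_sym; apply: h2p.1 => //.
      by rewrite in_setD aU aV.
    + move=> q qQ h; rewrite eq_sym; apply: h2p.1 => //.
      by rewrite in_setD bU bV.
    + have [E|E] := eqVneq (h2 a) (h2 b); rewrite ?eqxx //.
      by rewrite eq_sym (negbTE hd).
  - set Q2 := V :\: U :\ b.
    have Q2U : Q2 \subset V :\: U by apply: subD1set.
    have [h2 h2p] := IH Q2 (ltVU Q2 Q2U).
    have sp2 : (#|nbr e U b| + #|nbr e Q2 b|)%N = 3.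
      rewrite -db (nbr_split e V U b) (nVU b bV (frefl _)).
      have -> // : nbr e (V :\: U) b = nbr e Q2 b.
      by apply: nbr_eq => z /ebz [za zb]; rewrite !inE zb.
    have q2 : (#|nbr e Q2 b| <= 2)%N by move: sp2 kbpos; clear; lia.
    have [ab' hab] := avoid_img hU kb2.
    have [cb hcb] := avoid_img h2 q2.
    have [d hd] := diff3 ab'.
    apply: (@final_glue _ e esym eirr V U Q2 a b hU h2
      (if h2 a == cb then ab' else d) ab' (h2 a) cb neab nab).
    + by move=> y yU; rewrite !inE yU andbF.
    + move=> u q uU; rewrite !inE => /andP[qb /andP[qU qV]].
      case: (eqVneq q a) => [qa|qa].
        by rewrite qa; apply/negP => h; apply: (nbr0 ka0 uU); rewrite esym.
      by apply: nUW => //; rewrite !inE (negbTE qa) (negbTE qb) qV.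
    + exact: hUp.
    + exact: h2p.
    + move=> y yV yU; rewrite !inE yU yV !andbT negbK => /eqP ->.
      by right.
    + by move=> u uU h; case: (nbr0 ka0 uU h).
    + exact: img_avoid hab.
    + move=> q qQ h; rewrite eq_sym; apply: h2p.1 => //.
      by rewrite !inE neab aU aV.
    + exact: img_avoid hcb.
    + have [E|E] := eqVneq (h2 a) cb; rewrite ?eqxx //.
      exact: negbTE hd.
have kbpos : (0 < #|nbr e U b|)%N by apply: leq_trans kapos kab.
have ka2 : (#|nbr e U a| <= 2)%N by move: spa qa1; clear; lia.
have cimg : forall (h : T -> 'I_3) (Y : {set T}) s c,
    (#|nbr e Y s| <= 1)%N -> (#|h @: nbr e Y s :|: [set c]| <= 2)%N.
  move=> h Y s c H; apply: leq_trans (cardU_le _ _) _; rewrite cards1 addn1.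
  exact: leq_trans (leq_imset_card _ _) H.
case: (eqVneq #|nbr e U b| 2) => [kb2e|kbne].
- have qb : (#|nbr e Q b| <= 1)%N by move: spb kb2e; clear; lia.
  have NQb : forall q, q \in nbr e Q b -> q = x.
    move=> q qN; apply/eqP; rewrite -in_set1.
    suff -> : [set x] = nbr e Q b by [].
    apply/eqP; rewrite eqEcard sub1set xQb cards1 /=; exact: qb.
  have qa2 : (#|nbr e Q a| <= 2)%N by move: spa kapos; clear; lia.
  have [aa haa] := avoid_img hU ka2.
  have [ab' hab] := avoid_img hU kb2.
  have [ca hca] := avoid_img hQ qa2.
  have [d hd] := avoid3 (cimg hQ Q b ca qb).
  have [hd1 hd2] := nin _ _ _ hd.
  apply: (@final_glue _ e esym eirr V U Q a b hU hQ aa ab' ca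
    (if aa == ab' then ca else d) neab nab dUQ nUQ hUp hQp hSQ).
  + exact: img_avoid haa.
  + exact: img_avoid hab.
  + exact: img_avoid hca.
  + move=> q qQ ebq; have qx : q = x by apply: NQb; rewrite inE qQ ebq.
    rewrite qx; case: (aa == ab').
      by apply: (img_avoid hca) => //; rewrite esym.
    by apply: (img_avoid hd1) => //; rewrite -qx.
  + case: (eqVneq aa ab') => E; rewrite ?eqxx //.
    by symmetry; apply/negbTE; rewrite eq_sym; move: hd2; rewrite inE.
- have kb1 : #|nbr e U b| = 1%N by move: kbne kb2 kbpos; clear; lia.
  have ka1 : #|nbr e U a| = 1%N by move: kab kb1 kapos; clear; lia.
  have qa2 : (#|nbr e Q a| <= 2)%N by move: spa kapos; clear; lia.
  have qb2 : (#|nbr e Q b| <= 2)%N by move: spb kbpos; clear; lia.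
  have [ca hca] := avoid_img hQ qa2.
  have [cb hcb] := avoid_img hQ qb2.
  have cA : (#|hU @: nbr e U a :|:
      (if ca == cb then hU @: nbr e U b else set0)| <= 2)%N.
    apply: leq_trans (cardU_le _ _) _.
    have h1 := leq_imset_card hU (nbr e U a).
    have h2 := leq_imset_card hU (nbr e U b).
    move: h1 h2 ka1 kb1; case: (ca == cb); rewrite ?cards0; clear; lia.
  have [aa haa] := avoid3 cA.
  have [haa1 haa2] := nin _ _ _ haa.
  have [d hd] := avoid3 (cimg hU U b aa (eq_leq kb1)).
  have [hd1 hd2] := nin _ _ _ hd.
  apply: (@final_glue _ e esym eirr V U Q a b hU hQ aa
    (if ca == cb then aa else d) ca cb neab nab dUQ nUQ hUp hQp hSQ).
  + exact: img_avoid haa1.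
  + move: haa2; case: (ca == cb) => haa2.
      exact: img_avoid haa2.
    exact: img_avoid hd1.
  + exact: img_avoid hca.
  + exact: img_avoid hcb.
  + case: (eqVneq ca cb) => E; rewrite ?eqxx //.
    by apply/negbTE; rewrite eq_sym; move: hd2; rewrite inE.
Qed.

Lemma brooks (T : finType) (e : rel T) (esym : symmetric e)
  (eirr : irreflexive e) :
  (forall y, (#|nbr e setT y| <= 3)%N) ->
  ~ (exists F : {set T}, #|F| = 4 /\
       forall i j, i \in F -> j \in F -> i != j -> e i j) ->
  forall V : {set T}, col e V.
Proof.
move=> deg3 noK4 V.
have [k hk] : exists k, (#|V| <= k)%N by exists #|V|.
elim: k V hk => [|k IHk] V hk.
  by apply: lproper0; apply/eqP; rewrite -cards_eq0 -leqn0.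
have IH : forall V' : {set T}, (#|V'| < #|V|)%N -> col e V'.
  by move=> V' h; apply: IHk; rewrite -ltnS (leq_trans h hk).
have [V0|Vn0] := eqVneq V set0; first exact: lproper0.
have nsub : forall (Y : {set T}) y, (#|nbr e Y y| <= 3)%N.
  move=> Y y; apply: leq_trans (deg3 y); apply: subset_leq_card.
  by apply/subsetP => z; rewrite !inE => /andP[_ ->].
case: (classic (exists2 y, y \in V & (#|nbr e V y| <= 2)%N)) =>
    [[y yV hy]|H3].
  have lt : (#|V :\ y| < #|V|)%N.
    by rewrite [X in (_ < X)%N](cardsD1 y V) yV add1n ltnS.
  have [f fp] := IH (V :\ y) lt.
  have hy' : (#|nbr e V y| < #|(fun _ : T => [set: 'I_3]) y|)%N.
    by rewrite /= cardsT card_ord ltnS.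
  by have [g [gp _]] := ext esym eirr yV fp hy'; exists g.
have d3 : forall y, y \in V -> #|nbr e V y| = 3.
  move=> y yV; apply/eqP; rewrite eqn_leq nsub /= leqNgt.
  by apply/negP => h; apply: H3; exists y.
have full : forall y, y \in V -> nbr e setT y = nbr e V y.
  move=> y yV; apply/eqP; rewrite eq_sym eqEcard (d3 y yV) deg3 andbT.
  by apply/subsetP => z; rewrite !inE => /andP[_ ->].
have [x xV] := set0Pn _ Vn0.
have [a [b [aN bN neab nab]]] : exists a b,
    [/\ a \in nbr e V x, b \in nbr e V x, a != b & ~~ e a b].
  apply: NNPP => H; apply: noK4; exists (x |: nbr e V x); split.
    by rewrite cardsU1 (d3 x xV) inE eirr andbF.
  move=> i j hi hj nij.
  case/setU1P: hi => [ix|iN]; case/setU1P: hj => [jx|jN].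
  - by rewrite ix jx eqxx in nij.
  - by rewrite ix; move: jN; rewrite inE => /andP[].
  - by rewrite jx esym; move: iN; rewrite inE => /andP[].
  - case: (boolP (e i j)) => // nij'; case: H; exists i, j; split => //.
move: (aN) (bN); rewrite !inE => /andP[aV xa] /andP[bV xb].
set W := V :\: [set a; b].
case: (classic (exists U : {set T},
    [/\ U \subset W, U != set0, closed e W U & x \notin U])).
  case=> U [sU Un0 cU xU].
  case: (leqP #|nbr e U a| #|nbr e U b|) => kab.
    exact: (glue_ab esym eirr IH xV aV bV neab xa xb nab (d3 a aV) (d3 b bV)
              sU cU xU Un0 kab).
  have Wsym : V :\: [set b; a] = W by rewrite /W setUC.
  apply: (glue_ab esym eirr IH xV bV aV _ xb xa _ (d3 b bV) (d3 a aV)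
              _ _ xU Un0 (ltnW kab)).
  - by rewrite eq_sym.
  - by rewrite esym.
  - by rewrite Wsym.
  - by rewrite Wsym.
move=> noU.
pose L := fun y => if e y a || e y b then [set~ (ord0 : 'I_3)] else setT.
have WV : W \subset V by apply: subsetDl.
have [f [fp fL]] : exists f, lproper e W L f.
  apply: (DL esym eirr).
  - move=> y yW; have yV := subsetP WV y yW.
    rewrite /L; case: ifP => hab.
      rewrite cardsC1 card_ord /= -ltnS -(d3 y yV); apply: proper_card.
      apply/properP; split.
        by apply/subsetP => z; rewrite !inE => /andP[/andP[_ ->] ->].
      case/orP: hab => h; [exists a | exists b];
        rewrite !inE ?eqxx ?orbT /= ?andbF ?aV ?bV //= h.
    by rewrite cardsT card_ord nsub.
  - move=> U sU Un0 cU; exists x.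
      by apply: NNPP => xU; apply: noU; exists U; split => //; apply/negP.
    rewrite /L xa /= cardsC1 card_ord /=.
    have -> : nbr e W x = nbr e V x :\: [set a; b].
      by apply/setP => z; rewrite !inE; case: (z \in V); case: (e x z);
         case: (z == a); case: (z == b).
    have := cardsID [set a; b] (nbr e V x).
    have -> : nbr e V x :&: [set a; b] = [set a; b].
      by apply/setIidPr; apply/subsetP => z; case/set2P => ->.
    rewrite cards2 neab (d3 x xV) /=; clear; lia.
exists (fun y => if (y == a) || (y == b) then ord0 else f y).
split => [i j iV jV eij /=|i _]; last by rewrite inE.
have inW : forall z, z \in V -> ((z == a) || (z == b)) = false -> z \in W.
  by move=> z zV h; rewrite /W in_setD zV !inE h.
have L0 : forall z, z \in V -> ((z == a) || (z == b)) = false ->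
    e z a || e z b -> f z != ord0.
  by move=> z zV h hab; have := fL z (inW z zV h); rewrite /L hab !inE.
case: ifP => hi; case: ifP => hj.
- exfalso; case/orP: hi => /eqP ei; case/orP: hj => /eqP ej; rewrite ei ej in eij.
  + by rewrite eirr in eij.
  + by rewrite eij in nab.
  + by rewrite esym eij in nab.
  + by rewrite eirr in eij.
- rewrite eq_sym; apply: L0 => //.
  by case/orP: hi => /eqP ei; rewrite ei esym in eij; rewrite eij ?orbT.
- apply: L0 => //.
  by case/orP: hj => /eqP ej; rewrite ej in eij; rewrite eij ?orbT.
- by apply: fp => //; apply: inW.
Qed.

Lemma inj_col (T : finType) (e : rel T) (eirr : irreflexive e) (V : {set T}) :
  (#|V| <= 3)%N -> col e V.
Proof.
move=> hV; exists (fun y => inord (index y (enum V))); split => [i j iV jV eij|i _];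
  last by rewrite inE.
have hi : (index i (enum V) < 3)%N.
  by apply: leq_trans hV; rewrite cardE index_mem mem_enum.
have hj : (index j (enum V) < 3)%N.
  by apply: leq_trans hV; rewrite cardE index_mem mem_enum.
apply/negP => /eqP /(congr1 val); rewrite /= !inordK // => h.
have : nth i (enum V) (index i (enum V)) = nth i (enum V) (index j (enum V)).
  by rewrite h.
rewrite !nth_index ?mem_enum // => ij.
by rewrite ij eirr in eij.
Qed.

Lemma few_high (T : finType) (e : rel T) (esym : symmetric e)
  (eirr : irreflexive e) :
  (#|[set y | (2 < #|nbr e setT y|)%N]| <= 3)%N -> forall V : {set T}, col e V.
Proof.
move=> hh V.
have [k hk] : exists k, (#|V| <= k)%N by exists #|V|.
elim: k V hk => [|k IHk] V hk.
  by apply: lproper0; apply/eqP; rewrite -cards_eq0 -leqn0.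
case: (classic (exists2 y, y \in V & (#|nbr e V y| <= 2)%N)) =>
    [[y yV hy]|H3].
  have lt : (#|V :\ y| <= k)%N.
    by move: hk; rewrite [X in (X <= _)%N -> _](cardsD1 y V) yV add1n ltnS.
  have [f fp] := IHk (V :\ y) lt.
  have hy' : (#|nbr e V y| < #|(fun _ : T => [set: 'I_3]) y|)%N.
    by rewrite /= cardsT card_ord ltnS.
  by have [g [gp _]] := ext esym eirr yV fp hy'; exists g.
apply: inj_col => //; apply: leq_trans hh; apply: subset_leq_card.
apply/subsetP => y yV; rewrite inE.
have h3 : (2 < #|nbr e V y|)%N by rewrite ltnNge; apply/negP => h; apply: H3; exists y.
apply: leq_trans h3 _; apply: subset_leq_card.
by apply/subsetP => z; rewrite !inE => /andP[_ ->].
Qed.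

Definition ecycle (T : finType) (e : rel T) (s : seq T) :=
  [/\ uniq s, (3 <= size s)%N &
   forall x0 k, (k < size s)%N -> e (nth x0 s k) (nth x0 s (k.+1 %% size s))].

Definition okpath (T : finType) (e : rel T) (V : {set T}) (s : seq T) : bool :=
  [&& uniq s, all (fun z => z \in V) s &
      (if s is x :: p then path e x p else true)].

Lemma find_cycle (T : finType) (e : rel T) (esym : symmetric e)
  (eirr : irreflexive e) (V : {set T}) :
  V != set0 -> (forall y, y \in V -> (2 <= #|nbr e V y|)%N) ->
  exists s, ecycle e s /\ {subset s <= V}.
Proof.
move=> Vn0 h2.
pose P m := [exists t : m.-tuple T, okpath e V t].
have [y0 y0V] := set0Pn _ Vn0.
have P1 : P 1%N by apply/existsP; exists [tuple y0]; rewrite /okpath /= y0V.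
have exP : exists m, P m by exists 1%N.
have ubP : forall m, P m -> (m <= #|T|)%N.
  move=> m /existsP [t /and3P [ut _ _]]; rewrite -(size_tuple t) cardT.
  have := @uniq_leq_size T t (enum T) ut; apply => z _; by rewrite mem_enum.
case: (ex_maxnP exP ubP) => m Pm maxm.
have m1 := maxm 1%N P1.
move/existsP: Pm => [t tok].
have szt := size_tuple t.
move: tok szt; case: (tval t) => [|y p] /=; first by move=> _ sz; rewrite -sz in m1.
move=> /and3P [/andP [yp up] /andP [yV pV] pth] szt.
have [z zN zne] : exists2 z, z \in nbr e V y & z != nth y p 0.
  have : (0 < #|nbr e V y :\ nth y p 0|)%N.
    move: (h2 y yV); rewrite (cardsD1 (nth y p 0)).
    by case: (_ \in _) => /=; clear; lia.
  rewrite card_gt0 => /set0Pn [z]; rewrite !inE => /andP [zne zV].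
  by exists z; rewrite // inE.
move: zN; rewrite inE => /andP [zV eyz].
case: (boolP (z \in y :: p)) => zin; last first.
  have : P (size (z :: y :: p)).
    apply/existsP; exists (in_tuple (z :: y :: p)); rewrite /okpath /=.
    by rewrite zin yp (up : uniq p) zV yV (pV : all _ p) /= esym eyz pth.
  move/maxm; rewrite /= -szt.
  by rewrite ltnn.
set j := index z (y :: p).
have jlt : (j < size (y :: p))%N by rewrite index_mem.
have zj : nth y (y :: p) j = z by rewrite nth_index.
have j0 : j != 0%N.
  by apply: contraTneq eyz => j0; rewrite -zj j0 /= eirr.
have j1 : j != 1%N.
  by apply: contra_neq zne => j1; rewrite -zj j1.
exists (take j.+1 (y :: p)); split; last first.
  move=> w /mem_take; rewrite inE => /orP [/eqP ->//|].
  by move/allP: pV; apply.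
have szs : size (take j.+1 (y :: p)) = j.+1 by rewrite size_takel.
split.
- by rewrite take_uniq //= yp.
- by rewrite szs; move: j0 j1; case: (j) => [|[|jj]].
move=> x0 k; rewrite szs => kj.
rewrite !nth_take //; last by rewrite ltn_mod.
have hz : nth x0 (y :: p) j = z by rewrite nth_index.
case: (ltngtP k j) => [kj'|jk|->].
- rewrite modn_small //.
  have kp : (k < size p)%N by apply: leq_trans kj' _.
  by have := (pathP x0 pth) k kp.
- by move: kj; rewrite ltnS leqNgt jk.
- by rewrite modnn hz /= esym.
Qed.

Lemma forest (T : finType) (e : rel T) (esym : symmetric e)
  (eirr : irreflexive e) (V : {set T}) :
  (forall s, ecycle e s -> {subset s <= V} -> False) ->
  exists f, lproper e V (fun _ => [set~ (ord0 : 'I_3)]) f.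
Proof.
have [k hk] : exists k, (#|V| <= k)%N by exists #|V|.
elim: k V hk => [|k IHk] V hk hac.
  by apply: lproper0; apply/eqP; rewrite -cards_eq0 -leqn0.
have [V0|Vn0] := eqVneq V set0; first exact: lproper0.
case: (classic (exists2 y, y \in V & (#|nbr e V y| <= 1)%N)) =>
    [[y yV hy]|H2].
  have lt : (#|V :\ y| <= k)%N.
    by move: hk; rewrite [X in (X <= _)%N -> _](cardsD1 y V) yV add1n ltnS.
  have [f fp] := IHk (V :\ y) lt
    (fun s cs ss => hac s cs (fun z zs => subsetP (subD1set V y) z (ss z zs))).
  have hy' : (#|nbr e V y| < #|(fun _ : T => [set~ (ord0 : 'I_3)]) y|)%N.
    by rewrite /= cardsC1 card_ord ltnS.
  by have [g [gp _]] := ext esym eirr yV fp hy'; exists g.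
have h2 : forall y, y \in V -> (2 <= #|nbr e V y|)%N.
  by move=> y yV; rewrite ltnNge; apply/negP => h; apply: H2; exists y.
have [s [cs ss]] := find_cycle esym eirr Vn0 h2.
by case: (hac s cs ss).
Qed.

Unset Implicit Arguments. Set Strict Implicit.
Import GRing.Theory.
Local Open Scope ring_scope.

Lemma F2c (a : 'F_2) : a = 0 \/ a = 1.
Proof. case: a => [[|[|k]] H]; [left|right|by []]; exact/val_inj. Qed.

Lemma F2_11 : (1 + 1 : 'F_2) = 0.
Proof. by apply/eqP. Qed.

Lemma est_row (n : nat) (X : 'M['F_2]_(2, n)) (S : {set 'I_n})
  (r : 'rV['F_2]_n) :
  (r <= X)%MS -> \sum_(j in S) r 0 j = 1 -> estimable X S.
Proof.
move=> rX rS c; rewrite /estimable.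
set s := \sum_(x | block X c x) contrast S x.
have hinj : injective (fun x : 'rV['F_2]_n => x + r) by apply: addIr.
have hb : forall x, block X c (x + r) = block X c x.
  move=> x; rewrite /block; apply/idP/idP => h.
  - have -> : x - c = (x + r - c) + (-1) *: r.
      by rewrite scaleN1r addrAC addrK.
    by apply: addmx_sub => //; apply: scalemx_sub.
  - have -> : x + r - c = (x - c) + r by rewrite addrAC.
    exact: addmx_sub.
have hc : forall x, contrast S (x + r) = - contrast S x.
  move=> x; rewrite /contrast.
  have -> : \sum_(j in S) (x + r) 0 j = \sum_(j in S) x 0 j + 1.
    by rewrite -rS -big_split; apply: eq_bigr => j _; rewrite mxE.
  case: (F2c (\sum_(j in S) x 0 j)) => ->.
    by rewrite add0r eqxx oner_eq0.
  by rewrite F2_11 eqxx oner_eq0.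
have : s = - s.
  rewrite {1}/s (reindex_inj hinj) /= /s -sumrN.
  by apply: eq_big => x; [exact: hb | move=> _; exact: hc].
clearbody s; clear; lia.
Qed.

Lemma col3 (x y c0 c1 : 'I_3) : c0 != c1 -> (x != c1) = (y != c1) ->
  (x != c0) = (y != c0) -> x = y.
Proof.
move: x y c0 c1; do 4 case=> [[|[|[|?]]] ?] //=; move=> *; exact/val_inj.
Qed.

Lemma F2_neq (b1 b2 : bool) : b1 != b2 -> (b1%:R + b2%:R : 'F_2) = 1.
Proof. by case: b1; case: b2 => // _; rewrite ?addr0 ?add0r. Qed.

Definition adjS (n : nat) (Sg : {set {set 'I_n}}) : rel 'I_n :=
  fun i j => [set i; j] \in Sg.
Arguments adjS {n}.

Lemma design (n : nat) (e : rel 'I_n) (g : 'I_n -> 'I_3) (i0 j0 : 'I_n) :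
  g i0 != g j0 ->
  exists X : 'M['F_2]_(2, n),
    \rank X = 2%N /\
    (forall i : 'I_n, estimable X [set i]) /\
    (forall x y, x != y -> g x != g y -> estimable X [set x; y]).
Proof.
move=> gij.
set c0 := g i0; set c1 := g j0.
pose X : 'M['F_2]_(2, n) :=
  \matrix_(r < 2, j < n) (if r == ord0 then (g j != c1)%:R else (g j != c0)%:R).
have X0 : forall j, row ord0 X 0 j = (g j != c1)%:R by move=> j; rewrite !mxE.
have X1 : forall j, row ord_max X 0 j = (g j != c0)%:R by move=> j; rewrite !mxE.
have r0 := row_sub ord0 X; have r1 := row_sub ord_max X.
have I2 : forall r : 'I_2, r = ord0 \/ r = ord_max.
  by case=> [[|[|?]] ?]; [left|right|]; try exact/val_inj.
exists X; split; [|split].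
- pose A : 'M['F_2]_(n, 2) :=
    \matrix_(j < n, k < 2) (j == (if k == ord0 then i0 else j0))%:R.
  have XA : X *m A = 1%:M.
    apply/matrixP => r k; rewrite !mxE.
    set t := if k == ord0 then i0 else j0.
    rewrite (bigD1 t) //= big1 ?addr0; last first.
      by move=> j /negbTE jt; rewrite !mxE jt mulr0.
    rewrite !mxE eqxx mulr1 /t.
    case: (I2 r) => ->; case: (I2 k) => ->; rewrite /= ?eqxx //=.
    + by rewrite gij.
    + by rewrite eq_sym gij.
  apply/eqP; rewrite eqn_leq rank_leq_row /=.
  by rewrite -[X in (X <= _)%N](mxrank1 'F_2 2) -XA mxrankM_maxl.
- move=> i.
  case: (boolP (g i != c1)) => h.
    by apply: (@est_row n X _ _ r0); rewrite big_set1 X0 h.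
  apply: (@est_row n X _ _ r1); rewrite big_set1 X1.
  move: h; rewrite negbK => /eqP ->; by rewrite eq_sym gij.
- move=> x y nxy gxy.
  have sum2 : forall r : 'rV['F_2]_n,
      \sum_(j in [set x; y]) r 0 j = r 0 x + r 0 y.
    move=> r; rewrite big_setU1 ?big_set1 // inE.
    exact: nxy.
  case: (boolP ((g x != c1) != (g y != c1))) => h.
    by apply: (@est_row n X _ _ r0); rewrite sum2 !X0 F2_neq.
  apply: (@est_row n X _ _ r1); rewrite sum2 !X1 F2_neq //.
  apply: contra gxy => /eqP h2; apply/eqP.
  by apply: (col3 _ _ _ _ gij _ h2); move: h; rewrite negbK => /eqP.
Qed.

Lemma adj_sym (n : nat) (Sg : {set {set 'I_n}}) : symmetric (adjS Sg).
Proof. by move=> i j; rewrite /adjS setUC. Qed.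

Lemma adj_irr (n : nat) (Sg : {set {set 'I_n}}) :
  two_factor_set Sg -> irreflexive (adjS Sg).
Proof.
move=> tf i; apply/negP => h; have := tf _ h.
by rewrite setUid cards1.
Qed.

Lemma adj_deg (n : nat) (Sg : {set {set 'I_n}}) :
  two_factor_set Sg -> forall i, (#|nbr (adjS Sg) setT i| <= degree Sg i)%N.
Proof.
move=> tf i; have eirr := adj_irr _ _ tf.
rewrite /degree -(@card_in_imset _ _ (fun j => [set i; j])).
  apply: subset_leq_card; apply/subsetP => s /imsetP [j].
  by rewrite inE => /andP [_ hj] ->; rewrite inE; apply/andP; split; [exact: hj | rewrite !inE eqxx].
move=> j1 j2; rewrite !inE /= => h1 h2 hE.
have : j1 \in [set i; j2] by rewrite -hE !inE eqxx orbT.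
rewrite !inE => /orP [/eqP ji|/eqP //].
by rewrite ji eirr in h1.
Qed.

Lemma ecycle_is (n : nat) (Sg : {set {set 'I_n}}) s :
  ecycle (adjS Sg) s -> is_cycle Sg s.
Proof. by case=> a b c; split; [|split]. Qed.

Theorem theorem5 (n : nat) (Sg : {set {set 'I_n}}) :
  (2 <= n)%N ->
  two_factor_set Sg ->
  cond_i Sg \/ cond_ii Sg \/ cond_iii Sg ->
  exists X : 'M['F_2]_(2, n),
    \rank X = 2%N /\
    (forall i : 'I_n, estimable X [set i]) /\
    (forall e, e \in Sg -> estimable X e).
Proof.
move=> n2 tf conds.
pose e := adjS Sg.
have esym : symmetric e := adj_sym _ Sg.
have eirr : irreflexive e := adj_irr _ _ tf.
have deg := adj_deg _ _ tf.
have [f [fp _]] : col e setT.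
  case: conds => [[d3 nK4]|[c2|[nocyc|[i0 hi0]]]].
  - apply: (brooks esym eirr) => [i|]; first exact: leq_trans (deg i) (d3 i).
    exact: nK4.
  - apply: (few_high esym eirr); apply: leq_trans c2; apply: subset_leq_card.
    apply/subsetP => i; rewrite !inE => h; exact: leq_trans h (deg i).
  - have [f [fp _]] := forest esym eirr (V := setT)
      (fun s cs _ => nocyc s (ecycle_is _ _ _ cs)).
    by exists f; split => // i _; rewrite inE.
  - have acyc : forall s, ecycle e s -> {subset s <= [set~ i0]} -> False.
      move=> s cs ss; have := ss i0 (hi0 s (ecycle_is _ _ _ cs)).
      by rewrite !inE eqxx.
    have [f [fp fL]] := forest esym eirr acyc.
    have Vi : forall j, j != i0 -> j \in [set~ i0] by move=> j; rewrite !inE.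
    have f0 : forall j, j != i0 -> f j != ord0.
      by move=> j /Vi /fL; rewrite !inE.
    exists (fun y => if y == i0 then ord0 else f y).
    split => [i j _ _ eij|i _]; last by rewrite inE.
    case: (eqVneq i i0) => [ei|ni]; case: (eqVneq j i0) => [ej|nj].
    + by rewrite ei ej eirr in eij.
    + by rewrite eq_sym; apply: f0.
    + by apply: f0.
    + by apply: fp => //; apply: Vi.
have [g [gp [i0 [j0 gij]]]] : exists g : 'I_n -> 'I_3,
    (forall i j, e i j -> g i != g j) /\ exists i0 j0, g i0 != g j0.
  case: (classic (exists i0 j0, f i0 != f j0)) => [H|H].
    by exists f; split => // i j eij; apply: fp; rewrite ?inE.
  have fc : forall i j, f i = f j.
    move=> i j; apply/eqP; apply: NNPP => h; apply: H; exists i, j; exact/negP.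
  pose a0 := Ordinal (ltnW n2).
  pose a1 := Ordinal n2.
  exists (fun j => if j == a0 then ord0 else inord 1); split.
    move=> i j eij; exfalso; have := fp i j (in_setT i) (in_setT j) eij.
    by rewrite (fc i j) eqxx.
  exists a0, a1; rewrite eqxx.
  have -> : (a1 == a0) = false by [].
  by apply/eqP => /(congr1 val); rewrite /= inordK.
have [X [rX [h1 h2]]] := design n e g i0 j0 gij.
exists X; split => //; split => // s sS.
have /eqP/cards2P [x [y [nxy sE]]] := tf s sS.
rewrite sE in sS *.
by apply: h2 => //; apply: gp.
Qed.
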